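(* Let $n\ge 2$ and $0\le r\le n-1$ be integers and let $B_r=X^{(\le r)}\cup\{B\in X^{(r+1)}\cup X^{(r+2)}: \{1,2\}\subseteq B\}\subseteq Q_n$. Then $|B_r|=g_r=\sum_{j=0}^{r}\binom{n}{j}+\binom{n-1}{r}$, and $B_r$ is extremal, i.e. $N^t(B_r)$ and $N^t(B_r^c)$ are minimal for every integer $t>0$.
   Context: $X=[n]=\{1,\dots,n\}$, $X^{(j)}=\{B\subseteq X:|B|=j\}$, $X^{(\le j)}=\bigcup_{i\le j}X^{(i)}$. $Q_n$ is the hypercube with vertex set the power set of $[n]$ and metric $d(x,y)=|x\Delta y|$. For $A\subseteq Q_n$ and $t>0$, $N^t(A)=\{x\in Q_n:\min_{y\in A}d(x,y)\le t\}$; $N^t(A)$ is minimal if $|N^t(A)|\le |N^t(B)|$ for all $B\subseteq Q_n$ with $|B|=|A|$. $A$ is extremal if $N^t(A)$ and $N^t(Q_n\setminus A)$ are minimal for all $t>0$. *)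

(* Defs.v *)
(* X = [n] is modelled by 'I_n, with the paper's element k
   corresponding to the ordinal of value k-1; Q_n is {set 'I_n}. *)
From mathcomp Require Import all_boot.
Set Implicit Arguments. Unset Strict Implicit. Unset Printing Implicit Defensive.

Definition hdist (n : nat) (x y : {set 'I_n}) : nat :=
  #|(x :\: y) :|: (y :\: x)|.

Definition nbhd (n t : nat) (A : {set {set 'I_n}}) : {set {set 'I_n}} :=
  [set x | [exists y in A, hdist x y <= t]].

Definition minimal_nbhd (n t : nat) (A : {set {set 'I_n}}) : Prop :=
  forall B : {set {set 'I_n}}, #|B| = #|A| -> #|nbhd t A| <= #|nbhd t B|.

Definition extremal (n : nat) (A : {set {set 'I_n}}) : Prop :=
  forall t : nat, 0 < t -> minimal_nbhd t A /\ minimal_nbhd t (~: A).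

(* B_r = X^(<= r) ∪ { B ∈ X^(r+1) ∪ X^(r+2) : {1,2} ⊆ B };
   {1,2} is the set of ordinals of value 0 and 1. *)
Definition Bset (n r : nat) : {set {set 'I_n}} :=
  [set B : {set 'I_n} | (#|B| <= r)
     || (((#|B| == r.+1) || (#|B| == r.+2))
         && ([set i : 'I_n | val i < 2] \subset B))].

Definition gval (n r : nat) : nat :=
  \sum_(j < r.+1) 'C(n, j) + 'C(n.-1, r).

(* Main.v *)
Require Import Defs.
From mathcomp Require Import all_boot perm zify.
Set Implicit Arguments. Unset Strict Implicit. Unset Printing Implicit Defensive.

Section Basics.
Variable n : nat.
Implicit Types (x y z w : {set 'I_n}) (A : {set {set 'I_n}}).

Lemma inD x y k : (k \in (x :\: y) :|: (y :\: x)) = (k \in x) (+) (k \in y).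
Proof. by rewrite !inE; case: (k \in x); case: (k \in y). Qed.

Lemma hdistC x y : hdist x y = hdist y x.
Proof. by rewrite /hdist setUC. Qed.

Lemma hdist0 x : hdist x x = 0.
Proof. by rewrite /hdist setDv setU0 cards0. Qed.

Lemma hdist_tri x y z : hdist x z <= hdist x y + hdist y z.
Proof.
rewrite /hdist; apply: leq_trans (leq_card_setU _ _).
apply: subset_leq_card; apply/subsetP=> k; rewrite !inE.
by case: (k \in x); case: (k \in y); case: (k \in z).
Qed.

Lemma hdistE x y : hdist x y = #|x :\: y| + #|y :\: x|.
Proof.
rewrite /hdist -cardsUI (_ : _ :&: _ = set0) ?cards0 ?addn0 //.
by apply/setP=> k; rewrite !inE; case: (k \in x); case: (k \in y).
Qed.

Lemma hdist_U1 (e : 'I_n) y : hdist (e |: y) y <= 1.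
Proof.
rewrite /hdist -(cards1 e); apply: subset_leq_card; apply/subsetP=> k.
by rewrite !inE; case: (k == e); case: (k \in y).
Qed.

Lemma hdist_le1 x y : hdist x y <= 1 ->
  x \subset y \/ exists2 i, (i \in x) && (i \notin y) & x :\ i \subset y.
Proof.
move=> h; case: (boolP (x \subset y)) => [|/subsetPn [i ix iny]]; [by left|right].
exists i; first by rewrite ix iny.
apply/subsetP=> k; rewrite !inE => /andP[ki kx]; apply/negPn/negP => kny.
have : [set i; k] \subset (x :\: y) :|: (y :\: x).
  by apply/subsetP=> z; rewrite !inE => /orP[] /eqP->; rewrite ?ix ?iny ?kx ?kny.
move/subset_leq_card; rewrite cards2 eq_sym ki.
by move: h; rewrite /hdist => h1 h2; move: (leq_trans h2 h1).
Qed.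

Lemma nbhdP t A x y : y \in A -> hdist x y <= t -> x \in nbhd t A.
Proof. by move=> yA h; rewrite inE; apply/existsP; exists y; rewrite yA. Qed.

Lemma nbhd_sub0 A : A \subset nbhd 0 A.
Proof. by apply/subsetP=> x xA; apply: (nbhdP xA); rewrite hdist0. Qed.

Lemma nbhd_iter t A : nbhd 1 (nbhd t A) \subset nbhd t.+1 A.
Proof.
apply/subsetP=> x; rewrite inE => /existsP[y /andP[]]; rewrite inE.
move=> /existsP[z /andP[zA hyz]] hxy; apply: (nbhdP zA).
by apply: leq_trans (hdist_tri x y z) _; rewrite -addn1 addnC leq_add.
Qed.

Lemma nbhd0 t : nbhd t (set0 : {set {set 'I_n}}) = set0.
Proof. by apply/setP=> x; rewrite !inE; apply/existsP=> [[y]]; rewrite inE. Qed.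

End Basics.

Section Comp.
Variable n : nat.
Variable s : {set 'I_n} -> {set 'I_n}.
Variable P : pred {set 'I_n}.
Variable wt : {set 'I_n} -> nat.
Hypothesis sK : involutive s.
Hypothesis s_iso : forall x y, hdist (s x) (s y) = hdist x y.
Hypothesis P_bad : forall z, ~~ P z -> P (s z).
Hypothesis P_good : forall z, P z -> s z != z -> ~~ P (s z).
Hypothesis P_dist : forall z w, P z -> P w -> hdist z w <= hdist z (s w).
Hypothesis wt_dec : forall z, ~~ P z -> wt (s z) < wt z.
Implicit Types (A : {set {set 'I_n}}).

Definition compr A := [set z | ((z \in A) && (s z \in A)) || (P z && ((z \in A) || (s z \in A)))].
Definition fmove A z := if ~~ P z && (s z \notin A) then s z else z.

Lemma comp_imset A : compr A = fmove A @: A.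
Proof.
apply/setP=> z; apply/idP/imsetP.
  rewrite inE => H; case zA: (z \in A).
    exists z => //; rewrite /fmove; case: ifP => // /andP[nP nsA].
    by move: H; rewrite zA (negPf nP) (negPf nsA).
  move: H; rewrite zA /= => /andP[Pz szA]; exists (s z) => //.
  have nz : s z != z by apply: contraTneq szA => ->; rewrite zA.
  by rewrite /fmove (P_good Pz nz) sK zA.
move=> [y yA ->]; rewrite /fmove; case: ifP => [/andP[nP nsA]|H].
  by rewrite inE sK yA (P_bad nP) !orbT.
rewrite inE yA /=; by move: H; case: (P y); case: (s y \in A).
Qed.

Lemma fmove_inj A : {in A &, injective (fmove A)}.
Proof.
move=> x y xA yA; rewrite /fmove.
case: ifP => [/andP[nPx nsx]|Hx]; case: ifP => [/andP[nPy nsy]|Hy].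
- exact: (can_inj sK).
- by move=> e; move: nsx; rewrite e yA.
- by move=> e; move: nsy; rewrite -e xA.
- by [].
Qed.

Lemma card_compr A : #|compr A| = #|A|.
Proof. by rewrite comp_imset card_in_imset //; apply: fmove_inj. Qed.

Lemma nbhd_comp t A : nbhd t (compr A) \subset compr (nbhd t A).
Proof.
apply/subsetP=> z; rewrite inE => /existsP[w /andP[wC dzw]]; move: wC; rewrite inE => wC.
have sd : hdist (s z) (s w) <= t by rewrite s_iso.
rewrite inE; case Pz: (P z) => /=.
  apply/orP; right; case/orP: wC => [/andP[wA _]|/andP[_ /orP[wA|swA]]].
  - by rewrite (nbhdP wA dzw).
  - by rewrite (nbhdP wA dzw).
  - by rewrite (nbhdP swA sd) orbT.
rewrite ?orbF; have Psz : P (s z) by apply: P_bad; rewrite Pz.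
case/orP: wC => [/andP[wA swA]|/andP[Pw /orP[wA|swA]]].
- by rewrite (nbhdP wA dzw) (nbhdP swA sd).
- rewrite (nbhdP wA dzw); apply: (nbhdP wA).
  by apply: leq_trans (P_dist Psz Pw) sd.
- rewrite (nbhdP swA sd) andbT; apply: (nbhdP swA).
  rewrite -s_iso sK; apply: leq_trans (P_dist Psz Pw) sd.
Qed.

Lemma card_nbhd_comp t A : #|nbhd t (compr A)| <= #|nbhd t A|.
Proof. by rewrite -[X in _ <= X](card_compr (nbhd t A)) subset_leq_card // nbhd_comp. Qed.

Definition Phi A := \sum_(x in A) wt x.

Lemma Phi_compr A x : x \in A -> ~~ P x -> s x \notin A -> Phi (compr A) < Phi A.
Proof.
move=> xA nPx nsx; rewrite /Phi comp_imset big_imset; last exact: fmove_inj.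
rewrite (bigD1 x) //= [X in _ < X](bigD1 x) //=.
have -> : fmove A x = s x by rewrite /fmove nPx nsx.
have le : \sum_(i in A | i != x) wt (fmove A i) <= \sum_(i in A | i != x) wt i.
  apply: leq_sum => i _; rewrite /fmove; case: ifP => // /andP[nP _].
  exact: ltnW (wt_dec nP).
by rewrite -addSn; apply: leq_add (wt_dec nPx) le.
Qed.

Lemma min_stable A :
  (forall C : {set {set 'I_n}}, #|C| = #|A| -> #|nbhd 1 C| <= #|nbhd 1 A| -> Phi A <= Phi C) ->
  forall x, x \in A -> ~~ P x -> s x \in A.
Proof.
move=> H x xA nP; apply/negPn/negP => nsx; have := Phi_compr xA nP nsx.
by rewrite ltnNge (H _ (card_compr A) (card_nbhd_comp 1 A)).
Qed.

End Comp.

Section Concrete.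
Variable n : nat.
Implicit Types (x y z w : {set 'I_n}) (A : {set {set 'I_n}}).

Definition sdown A := forall x (i : 'I_n), x \in A -> i \in x -> x :\ i \in A.
Definition sshift A := forall x (i j : 'I_n), x \in A -> i < j -> j \in x -> i \notin x ->
  i |: (x :\ j) \in A.

Definition wt x := \sum_(k in x) (val k).+1.

Definition tog (i : 'I_n) x := (x :\: [set i]) :|: ([set i] :\: x).
Lemma in_tog i x k : (k \in tog i x) = (k \in x) (+) (k == i).
Proof. by rewrite !inE; case: (k \in x); case: (k == i). Qed.

Lemma togK i : involutive (tog i).
Proof. by move=> x; apply/setP=> k; rewrite !in_tog addbK. Qed.

Lemma tog_iso i x y : hdist (tog i x) (tog i y) = hdist x y.
Proof.
rewrite /hdist; apply: eq_card => k.
have := inD (tog i x) (tog i y) k; rewrite !in_tog => ->; rewrite inD.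
by case: (k \in x); case: (k \in y); case: (k == i).
Qed.

Lemma tog_in i x : i \in x -> tog i x = x :\ i.
Proof. move=> ix; apply/setP=> k; rewrite in_tog !inE; case: eqP => [->|_]; rewrite ?ix ?addbF //. Qed.

Lemma tog_dist i z w : i \notin z -> i \notin w -> hdist z w <= hdist z (tog i w).
Proof.
move=> iz iw; apply: subset_leq_card; apply/subsetP=> k.
have := inD z (tog i w) k; rewrite in_tog => ->; rewrite inD.
by case: eqP => [->|_]; rewrite ?(negPf iz) ?(negPf iw) ?addbF.
Qed.

Lemma tog_wt i z : ~~ (i \notin z) -> wt (tog i z) < wt z.
Proof.
rewrite negbK => iz; rewrite /wt (bigD1 i iz) /=.
rewrite (eq_bigl (fun k => (k \in z) && (k != i))); first by rewrite addSn ltnS leq_addl.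
by move=> k; rewrite in_tog; case: eqP => [->|]; rewrite ?iz ?andbF ?andbT ?addbF.
Qed.

Variables i j : 'I_n.
Hypothesis ij : i < j.

Definition sw x := tperm i j @^-1: x.
Definition Psw x := ~~ ((j \in x) && (i \notin x)).

Lemma swK : involutive sw.
Proof. by move=> x; apply/setP=> k; rewrite !inE tpermK. Qed.

Lemma sw_iso x y : hdist (sw x) (sw y) = hdist x y.
Proof.
rewrite /hdist -(card_preimset _ (@perm_inj _ (tperm i j))); apply: eq_card => k.
by rewrite /sw !inE !tpermK.
Qed.

Lemma sw_fix z : (i \in z) = (j \in z) -> sw z = z.
Proof. by move=> h; apply/setP=> k; rewrite /sw inE; case: tpermP => [->|->|] //; rewrite h. Qed.

Lemma sw_bad z : ~~ Psw z -> Psw (sw z).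
Proof.
rewrite /Psw negbK => /andP[jz iz]; rewrite /sw !inE tpermR tpermL.
by rewrite (negPf iz).
Qed.

Lemma sw_nonfix z : Psw z -> sw z != z -> (i \in z) && (j \notin z).
Proof.
rewrite /Psw => Pz nf; case iz: (i \in z); case jz: (j \in z) => //=.
- by move: nf; rewrite sw_fix ?eqxx // iz jz.
- by move: Pz; rewrite iz jz.
- by move: nf; rewrite sw_fix ?eqxx // iz jz.
Qed.

Lemma sw_good z : Psw z -> sw z != z -> ~~ Psw (sw z).
Proof.
move=> Pz nf; case/andP: (sw_nonfix Pz nf) => iz jz.
by rewrite /Psw negbK /sw !inE tpermR tpermL iz.
Qed.

Lemma sw_dist z w : Psw z -> Psw w -> hdist z w <= hdist z (sw w).
Proof.
move=> Pz Pw; case: (eqVneq (sw w) w) => [->//|nw].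
case: (eqVneq (sw z) z) => [ez|nz].
  by rewrite -{2}ez sw_iso.
case/andP: (sw_nonfix Pz nz) => iz jz; case/andP: (sw_nonfix Pw nw) => iw jw.
apply: subset_leq_card; apply/subsetP=> k; rewrite !inD inE.
by case: tpermP => [->|->|_ _]; rewrite ?iz ?iw ?(negPf jz) ?(negPf jw).
Qed.

Lemma sw_wt z : ~~ Psw z -> wt (sw z) < wt z.
Proof.
rewrite /Psw negbK => /andP[jz iz].
rewrite /wt (reindex_inj (@perm_inj _ (tperm i j))) /=.
rewrite (eq_bigl (fun k => k \in z)); last by move=> k; rewrite inE tpermK.
rewrite (bigD1 j jz) [X in _ < X](bigD1 j jz) /= tpermR.
rewrite (eq_bigr (fun k => (val k).+1)); last first.
  move=> k /andP[kz kj]; rewrite tpermD // ?(eq_sym j) //.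
  by apply: contraNneq iz => ->.
by rewrite -addSn leq_add2r.
Qed.

End Concrete.

Lemma compress n (B : {set {set 'I_n}}) :
  exists A : {set {set 'I_n}}, [/\ #|A| = #|B|, #|nbhd 1 A| <= #|nbhd 1 B|, sdown A & sshift A].
Proof.
pose p (S : {set {set 'I_n}}) := (#|S| == #|B|) && (#|nbhd 1 S| <= #|nbhd 1 B|).
have pB : p B by rewrite /p !eqxx leqnn.
case: (arg_minnP (fun S => Phi (@wt n) S) pB) => A /andP[/eqP cA nA] minA.
have H : forall C : {set {set 'I_n}}, #|C| = #|A| -> #|nbhd 1 C| <= #|nbhd 1 A| ->
    Phi (@wt n) A <= Phi (@wt n) C.
  move=> C c1 c2; apply: minA; rewrite /p c1 cA eqxx /=; exact: leq_trans c2 nA.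
exists A; split => //.
- move=> x i xA ix.
  have := min_stable (@togK n i) (@tog_iso n i) (P := fun x => i \notin x)
    _ _ (@tog_dist n i) (@tog_wt n i) H xA.
  rewrite tog_in // ix; apply => //.
  + by move=> z; rewrite negbK => iz; rewrite in_tog iz eqxx.
  + by move=> z iz _; rewrite negbK in_tog (negPf iz) eqxx.
- move=> x i j xA ij jx ix.
  have := min_stable (@swK n i j) (@sw_iso n i j) (@sw_bad n i j)
    (@sw_good n i j) (@sw_dist n i j) (@sw_wt n i j ij) H xA.
  have -> : sw i j x = i |: (x :\ j).
    apply/setP=> k; rewrite /sw !inE; case: tpermP => [->|->|/eqP ki /eqP kj].
    * by rewrite eqxx.
    * by rewrite (negPf ix) eqxx orbF; apply/esym/eqP => e; move: ij; rewrite e ltnn.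
    * by rewrite (negPf ki) kj.
  by apply; rewrite /Psw jx ix.
Qed.

Section Claim.
Variable n : nat.
Implicit Types (x y z w : {set 'I_n}) (A : {set {set 'I_n}}).

Definition Qk (k : nat) : {set 'I_n} := [set i : 'I_n | i < k].
Definition Nk (k : nat) A := [set x : {set 'I_n} | (x \subset Qk k) && [exists y in A, hdist x y <= 1]].
Definition gk k r := 2 * \sum_(j < r.+1) 'C(k.-1, j).

Lemma NkP k A x y : x \subset Qk k -> y \in A -> hdist x y <= 1 -> x \in Nk k A.
Proof. by move=> xQ yA h; rewrite inE xQ /=; apply/existsP; exists y; rewrite yA. Qed.

Lemma sub_Nk k A : (forall x, x \in A -> x \subset Qk k) -> A \subset Nk k A.
Proof. by move=> AQ; apply/subsetP=> x xA; apply: (NkP (AQ x xA) xA); rewrite hdist0. Qed.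

Lemma down_sub A : sdown A -> forall y x, y \in A -> x \subset y -> x \in A.
Proof.
move=> dA y x; move: {2}#|y| (leqnn #|y|) => m; elim: m y => [|m IH] y hy yA xy.
  move: hy; rewrite leqn0 cards_eq0 => /eqP y0; move: xy; rewrite y0 subset0 => /eqP->.
  by rewrite -y0.
case: (eqVneq x y) => [->//|nxy].
have : ~~ (y \subset x) by apply: contra nxy => yx; rewrite eqEsubset xy yx.
case/subsetPn => i iy ix.
apply: (IH (y :\ i)); first by move: hy; rewrite (cardsD1 i y) iy.
  exact: dA.
by apply/subsetP=> k kx; rewrite !inE (subsetP xy _ kx) andbT; apply: contraNneq ix => <-.
Qed.

Lemma pascal k r : \sum_(j < r.+2) 'C(k.+1, j) = \sum_(j < r.+2) 'C(k, j) + \sum_(j < r.+1) 'C(k, j).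
Proof.
elim: r => [|r IH].
  by rewrite !big_ord_recr !big_ord0 /= !bin0 !bin1; lia.
rewrite big_ord_recr IH /= binS [in RHS]big_ord_recr [in X in _ = _ + X]big_ord_recr /=.
lia.
Qed.

Lemma gk1 r : gk 1 r = 2.
Proof. by rewrite /gk big_ord_recl bin0 big1 // => j _; rewrite bin0n. Qed.

Lemma gk0 k : gk k 0 = 2.
Proof. by rewrite /gk big_ord_recl big_ord0 bin0. Qed.

Lemma gkS k r : 0 < k -> gk k.+1 r.+1 = gk k r.+1 + gk k r.
Proof. by case: k => // k _; rewrite /gk /= pascal mulnDr. Qed.

Lemma gkS0 k : gk k.+1 0 = gk k 0.
Proof. by rewrite !gk0. Qed.

Lemma claim_step k (k0 : 0 < k) (hk : k < n)
  (IH : forall r A, (forall x, x \in A -> x \subset Qk k) -> sdown A -> sshift A ->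
         gk k r <= #|A| -> gk k r.+1 <= #|Nk k A|)
  r A (AQ : forall x, x \in A -> x \subset Qk k.+1) (dA : sdown A) (sA : sshift A)
  (hA : gk k.+1 r <= #|A|) : gk k.+1 r.+1 <= #|Nk k.+1 A|.
Proof.
pose e : 'I_n := Ordinal hk.
pose S := [set x : {set 'I_n} | e \in x].
pose A0 := A :\: S.
pose A1 := (fun x => x :\ e) @: (A :&: S).
have inA0 x : (x \in A0) = (e \notin x) && (x \in A) by rewrite !inE.
have inA1 y : (y \in A1) = (e \notin y) && (e |: y \in A).
  apply/imsetP/andP => [[x /setIP[xA]] | [ey eyA]].
    by rewrite inE => ex ->; split; [rewrite !inE eqxx | rewrite setD1K].
  by exists (e |: y); [rewrite !inE eyA eqxx | rewrite setU1K].
have cardA : #|A| = #|A0| + #|A1|.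
  rewrite /A1 card_in_imset; first by rewrite addnC cardsID.
  move=> x y /setIP[_]; rewrite inE => ex /setIP[_]; rewrite inE => ey exy.
  by rewrite -(setD1K ex) exy setD1K.
have eQ x : x \subset Qk k -> e \notin x.
  by move=> xQ; apply/negP => ex; have := subsetP xQ e ex; rewrite inE ltnn.
have QS x : x \subset Qk k.+1 -> e \notin x -> x \subset Qk k.
  move=> xQ ex; apply/subsetP=> i ix; have := subsetP xQ i ix; rewrite !inE ltnS leq_eqVlt.
  case/orP => // /eqP ik; have ie : i = e by apply: val_inj.
  by move: ex; rewrite -ie ix.
have QQ x : x \subset Qk k -> x \subset Qk k.+1.
  by move=> xQ; apply/subsetP=> i /(subsetP xQ); rewrite !inE => /ltnW.
have A0Q x : x \in A0 -> x \subset Qk k.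
  by rewrite inA0 => /andP[ex xA]; apply: QS => //; apply: AQ.
have A1Q y : y \in A1 -> y \subset Qk k.
  rewrite inA1 => /andP[ey eyA]; apply: QS => //.
  by apply: subset_trans (AQ _ eyA); apply: subsetUr.
have ltQ x i : x \subset Qk k -> i \in x -> i < k.
  by move=> xQ ix; have := subsetP xQ i ix; rewrite inE.
have neqe (i : 'I_n) : i < k -> (i == e) = false.
  by move=> ik; apply/negbTE; apply/eqP => ie; move: ik; rewrite ie ltnn.
have dA0 : sdown A0.
  move=> x i; rewrite !inA0 => /andP[ex xA] ix; rewrite dA // andbT.
  by apply: contra ex => /setD1P[].
have sA0 : sshift A0.
  move=> x i j xA ij jx ix; have xQ := A0Q x xA; move: xA; rewrite !inA0 => /andP[ex xA].
  rewrite sA // andbT !inE negb_or negb_and ex orbT andbT eq_sym neqe //.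
  by apply: ltn_trans ij (ltQ _ _ xQ jx).
have dA1 : sdown A1.
  move=> y i yA1 iy; have yQ := A1Q y yA1; move: yA1; rewrite !inA1 => /andP[ey eyA].
  have ie := neqe i (ltQ _ _ yQ iy).
  have -> : e |: (y :\ i) = (e |: y) :\ i.
    apply/setP=> z; rewrite !inE; case: (eqVneq z e) => [->|] //=.
    by rewrite eq_sym ie.
  rewrite dA // ?inE ?iy ?orbT // andbT.
  by rewrite negb_and (negPf ey) orbT.
have sA1 : sshift A1.
  move=> y i j yA1 ij jy iy; have yQ := A1Q y yA1; move: yA1; rewrite !inA1 => /andP[ey eyA].
  have jk := ltQ _ _ yQ jy; have ik := ltn_trans ij jk.
  have ie := neqe i ik; have je := neqe j jk.
  have ij' : (i == j) = false by apply/negbTE; apply/eqP => e'; move: ij; rewrite e' ltnn.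
  have -> : e |: (i |: (y :\ j)) = i |: ((e |: y) :\ j).
    apply/setP=> z; rewrite !inE; case: (eqVneq z e) => [->|ze] /=.
      by rewrite eq_sym ie eq_sym je.
    by [].
  apply/andP; split; first by rewrite !inE negb_or negb_and (negPf ey) eq_sym ie orbT.
  by apply: sA => //; rewrite !inE ?jy ?orbT // ie (negPf iy).
have N1 : Nk k A1 \subset A0.
  apply/subsetP=> x; rewrite inE => /andP[xQ /existsP[y /andP[yA1 dxy]]].
  move: (yA1); rewrite inA1 inA0 (eQ _ xQ) /= => /andP[ey eyA].
  case: (hdist_le1 dxy) => [xy|[i /andP[ix iny] xiy]].
    by apply: (down_sub dA eyA); apply: subset_trans xy (subsetUr _ _).
  have ik := ltQ _ _ xQ ix.
  have zA : i |: ((e |: y) :\ e) \in A.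
    apply: sA => //; first by rewrite setU11.
    by rewrite !inE negb_or iny andbT neqe.
  apply: (down_sub dA zA); apply/subsetP=> z zx; rewrite !inE.
  case: (eqVneq z i) => //= zi; rewrite orbC.
  have : z \in x :\ i by rewrite !inE zi zx.
  move/(subsetP xiy) => -> /=; rewrite andbT.
  by apply: contraNneq (eQ _ xQ) => <-.
have A1N : A1 \subset Nk k A1 by apply: sub_Nk.
have N0 : #|Nk k A0| + #|A0| <= #|Nk k.+1 A|.
  have -> : #|A0| = #|(fun x => e |: x) @: A0|.
    rewrite card_in_imset // => x y xA yA exy.
    by rewrite -(setU1K (eQ _ (A0Q _ xA))) exy setU1K // (eQ _ (A0Q _ yA)).
  rewrite -cardsUI (_ : _ :&: _ = set0) ?cards0 ?addn0.
    apply: subset_leq_card; apply/subsetP=> x; rewrite inE => /orP[].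
      rewrite inE => /andP[xQ /existsP[y /andP[yA0 dxy]]].
      apply: (NkP (QQ _ xQ) _ dxy); by move: yA0; rewrite inA0 => /andP[].
    move=> /imsetP[y yA0 ->]; apply: (NkP _ _ (hdist_U1 e y)).
      apply/subsetP=> i; rewrite !inE => /orP[/eqP->|iy]; first by rewrite /= ltnSn.
      by have := subsetP (QQ _ (A0Q _ yA0)) i iy; rewrite inE.
    by move: yA0; rewrite inA0 => /andP[].
  apply/setP=> x; rewrite !inE; apply/negbTE; apply/negP => /andP[/andP[xQ _]].
  by move=> /imsetP[y _ xe]; move: (eQ _ xQ); rewrite xe setU11.
have b_le_a : #|A1| <= #|A0|.
  by apply: leq_trans (subset_leq_card A1N) (subset_leq_card N1).
have NA1 : #|Nk k A1| <= #|A0| := subset_leq_card N1.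
case: (leqP (gk k r) #|A0|) => [ha|ha].
  have := IH r A0 A0Q dA0 sA0 ha; rewrite gkS //; lia.
case: r hA ha => [|r] hA ha.
  exfalso; move: hA ha; rewrite gkS0 gk0 cardA => hA ha.
  have : 0 < #|A1| by lia.
  case/card_gt0P => y yA1.
  have e0A1 : set0 \in A1 by apply: (down_sub dA1 yA1); apply: sub0set.
  pose i0 : 'I_n := Ordinal (ltn_trans k0 hk).
  have h2 : 2 <= #|Nk k A1|.
    have : [set set0; i0 |: set0] \subset Nk k A1.
      apply/subsetP=> x /set2P[] ->.
        by apply: (NkP _ e0A1); rewrite ?sub0set ?hdist0.
      apply: (NkP _ e0A1 (hdist_U1 i0 set0)).
      by apply/subsetP=> z; rewrite !inE orbF => /eqP ->; rewrite /= k0.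
    move/subset_leq_card; rewrite cards2.
    suff -> : (set0 != i0 |: set0) by [].
    by apply/eqP => /setP /(_ i0); rewrite !inE eqxx.
  lia.
move: hA; rewrite gkS // cardA => hA.
have hb : gk k r <= #|A1| by lia.
have := IH r A1 A1Q dA1 sA1 hb; lia.
Qed.

Lemma claim k : 0 < k -> k <= n -> forall r A, (forall x, x \in A -> x \subset Qk k) ->
  sdown A -> sshift A -> gk k r <= #|A| -> gk k r.+1 <= #|Nk k A|.
Proof.
elim: k => [//|k IH] _ hk.
case: k IH hk => [|k] IH hk.
  move=> r A AQ _ _; rewrite !gk1 => h.
  by apply: leq_trans h (subset_leq_card (sub_Nk AQ)).
by apply: claim_step => //; apply: IH => //; apply: ltnW.
Qed.

End Claim.

Section LB.
Variable n : nat.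
Hypothesis n0 : 0 < n.

Lemma LB1 m (B : {set {set 'I_n}}) : gk n m <= #|B| -> gk n m.+1 <= #|nbhd 1 B|.
Proof.
move=> hB; case: (compress B) => A [cA nA dA sA].
have AQ : forall x, x \in A -> x \subset Qk n n.
  by move=> x _; apply/subsetP=> i _; rewrite inE ltn_ord.
have hA : gk n m <= #|A| by rewrite cA.
have := @claim n n n0 (leqnn n) m A AQ dA sA hA.
have -> : Nk n A = nbhd 1 A.
  apply/setP=> x; rewrite !inE (_ : x \subset Qk n n) //.
  by apply/subsetP=> i _; rewrite inE ltn_ord.
move=> h; exact: leq_trans h nA.
Qed.

Lemma LBt t m (B : {set {set 'I_n}}) : gk n m <= #|B| -> gk n (m + t) <= #|nbhd t B|.
Proof.
elim: t => [|t IH] hB.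
  by rewrite addn0; apply: leq_trans hB (subset_leq_card (nbhd_sub0 B)).
rewrite addnS; apply: leq_trans (subset_leq_card (nbhd_iter t B)).
exact: LB1 (IH hB).
Qed.

End LB.

Lemma card_or (T : finType) (p q : pred T) : (forall x, p x -> ~~ q x) ->
  #|[set x | p x || q x]| = #|[set x | p x]| + #|[set x | q x]|.
Proof.
move=> h; rewrite -cardsUI (_ : [set x | p x] :&: [set x | q x] = set0) ?cards0 ?addn0.
  by apply: eq_card => x; rewrite !inE.
apply/setP=> x; rewrite !inE; apply/negbTE; apply/negP => /andP[px qx].
by move: (h x px); rewrite qx.
Qed.

Lemma sum_full N : \sum_(j < N.+1) 'C(N, j) = 2 ^ N.
Proof.
have := expnDn 1 1 N; rewrite addn1 => ->.
by apply: eq_bigr => i _; rewrite !exp1n !muln1.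
Qed.

Lemma sum_big N m : N <= m -> \sum_(j < m.+1) 'C(N, j) = 2 ^ N.
Proof.
move/subnKC <-; elim: (m - N) => [|d IH]; first by rewrite addn0 sum_full.
by rewrite addnS big_ord_recr IH /= bin_small ?addn0 // ltnS leq_addr.
Qed.

Lemma sum_rev N b : b <= N ->
  \sum_(j < b.+1) 'C(N, j) = \sum_(N - b <= j < N.+1) 'C(N, j).
Proof.
elim: b => [|b IH] h.
  by rewrite big_ord_recr big_ord0 subn0 big_nat1 /= add0n bin0 binn.
rewrite big_ord_recr IH ?(ltnW h) //= [in RHS]big_ltn; last by rewrite ltnS leq_subr.
by rewrite subnSK // bin_sub // addnC.
Qed.

Lemma sum_compl N a b : a + b = N.-1 -> 0 < N ->
  \sum_(j < a.+1) 'C(N, j) + \sum_(j < b.+1) 'C(N, j) = 2 ^ N.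
Proof.
move=> hab N0; rewrite (sum_rev (b := b)); last by lia.
have -> : N - b = a.+1 by lia.
rewrite -(big_mkord (fun _ => true) (fun j => 'C(N, j))) -big_cat_nat //; last by lia.
by rewrite big_mkord sum_full.
Qed.

Section Count.
Variable n : nat.
Hypothesis hn : 2 <= n.

Definition T01 : {set 'I_n} := [set i : 'I_n | val i < 2].

Lemma card_T01 : #|T01| = 2.
Proof.
have h0 : 0 < n by lia.
have h1 : 1 < n by lia.
have -> : T01 = [set Ordinal h0; Ordinal h1].
  apply/setP=> i; rewrite !inE; case: i => [[|[|i]] hi] //.
rewrite cards2 //.
Qed.

Lemma card_setT : #|[set: {set 'I_n}]| = 2 ^ n.
Proof.
have -> : [set: {set 'I_n}] = powerset [set: 'I_n].
  by apply/setP=> x; rewrite !inE subsetT.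
by rewrite card_powerset cardsT card_ord.
Qed.

Lemma card_layer j : #|[set B : {set 'I_n} | #|B| == j]| = 'C(n, j).
Proof. by rewrite card_draws card_ord. Qed.

Lemma card_L m : #|[set B : {set 'I_n} | #|B| <= m]| = \sum_(j < m.+1) 'C(n, j).
Proof.
elim: m => [|m IH].
  rewrite big_ord_recr big_ord0 -card_layer; apply: eq_card => B; by rewrite !inE leqn0.
rewrite big_ord_recr /= -IH -card_layer -card_or.
  by apply: eq_card => B; rewrite !inE leq_eqVlt ltnS orbC.
by move=> B h; apply/negP => /eqP e; move: h; rewrite e ltnn.
Qed.

Definition M1 k := [set B : {set 'I_n} | (#|B| == k) && (T01 \subset B)].

Lemma card_M1 k : #|M1 k.+2| = 'C(n.-2, k).
Proof.
have cC : #|~: T01| = n.-2.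
  by have := cardsC T01; rewrite card_T01 card_ord; lia.
rewrite -cC -cards_draws.
have -> : M1 k.+2 = (fun C => T01 :|: C) @: [set C : {set 'I_n} | C \subset ~: T01 & #|C| == k].
  apply/setP=> B; rewrite inE; apply/andP/imsetP => [[/eqP cB TB]|[C]].
    exists (B :\: T01).
      rewrite inE; apply/andP; split.
        by apply/subsetP=> z; rewrite !inE => /andP[].
      rewrite cardsD (setIidPr TB) cB card_T01; apply/eqP; lia.
    apply/setP=> z; rewrite !inE; case: (ltnP z 2) => hz //=.
    by rewrite (subsetP TB) // inE.
  rewrite inE => /andP[CT /eqP cC'] ->; split; last exact: subsetUl.
  rewrite cardsU (_ : T01 :&: C = set0) ?cards0 ?subn0 ?card_T01 ?cC'; first by apply/eqP; lia.
  apply/setP=> z; rewrite !inE; apply/negbTE; apply/negP => /andP[zT zC].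
  by move: (subsetP CT _ zC); rewrite !inE zT.
rewrite card_in_imset // => C1 C2; rewrite !inE => /andP[h1 _] /andP[h2 _] e.
apply/setP=> z; move/setP/(_ z): e; move: (subsetP h1 z) (subsetP h2 z); rewrite !inE.
case: (ltnP z 2) => hz /= u1 u2 e; last exact: e.
by apply/idP/idP => [/u1|/u2].
Qed.

Lemma card_M1_1 : #|M1 1| = 0.
Proof.
apply/eqP; rewrite cards_eq0; apply/eqP/setP => B; rewrite !inE.
apply/negbTE/negP => /andP[/eqP c1 sub].
by have := subset_leq_card sub; rewrite c1 card_T01.
Qed.

Lemma card_Bset m : #|Bset n m| = gval n m.
Proof.
rewrite /Bset -/T01.
rewrite card_or; last first.
  move=> B h; rewrite negb_and; apply/orP; left; apply/negP => /orP[] /eqP e;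
  by move: h; rewrite e; lia.
rewrite card_L.
rewrite (eq_card (B := [set B : {set 'I_n} | ((#|B| == m.+1) && (T01 \subset B)) ||
  ((#|B| == m.+2) && (T01 \subset B))])); last first.
  by move=> B; rewrite !inE andb_orl.
rewrite card_or; last first.
  by move=> B /andP[/eqP e _]; rewrite e negb_and; apply/orP; left; apply/eqP; lia.
rewrite -/(M1 m.+1) -/(M1 m.+2) card_M1 /gval; congr (_ + _).
case: m => [|m]; [rewrite card_M1_1 | rewrite card_M1].
  by rewrite !bin0.
by case: (n) hn => [|[|n']] //= _; rewrite [in RHS]binS addnC.
Qed.

End Count.



Lemma gval_gk n m : 0 < n -> gval n m = gk n m.
Proof.
case: n => // N _; rewrite /gval /gk /=.
case: m => [|m]; first by rewrite !big_ord_recr !big_ord0 /= !bin0.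
rewrite pascal [X in _ = 2 * X]big_ord_recr /=.
set s := \sum_(i < m.+1) _.
rewrite [\sum_(j < m.+2) _]big_ord_recr /= -/s.
lia.
Qed.

Lemma gk_compl n a b : 2 <= n -> a + b = n - 2 -> gk n a + gk n b = 2 ^ n.
Proof.
move=> hn hab; rewrite /gk -mulnDr sum_compl; last by lia.
  by case: n hn {hab} => // n' _; rewrite expnS.
lia.
Qed.

Lemma gk_big n m : 0 < n -> n.-1 <= m -> gk n m = 2 ^ n.
Proof. by move=> n0 h; rewrite /gk sum_big //; case: n n0 {h} => // n' _; rewrite expnS. Qed.

Lemma nbhd_B n r t : nbhd t (Bset n r) \subset Bset n (r + t).
Proof.
apply/subsetP => x; rewrite inE => /existsP[y /andP[yB dxy]]; move: yB; rewrite /Bset !inE.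
have hx := hdistE x y; rewrite hx in dxy; clear hx.
have c1 := cardsID y x; have c2 := cardsID x y; rewrite setIC in c2.
case/orP => [hy | /andP[hy Ty]].
  by apply/orP; left; lia.
case: (leqP #|x| (r + t)) => hxr; first by [].
have : #|y :\: x| = 0.
  by case/orP: hy => /eqP hy; lia.
move/eqP; rewrite cards_eq0 setD_eq0 => yx.
rewrite /= (subset_trans Ty yx) andbT.
case/orP: hy => /eqP hy; case: (eqVneq #|x| (r + t).+1) => [->|ne]; rewrite ?eqxx //=.
all: apply/eqP; move/eqP: ne => ne.
all: move: dxy c1 c2 hxr hy ne; set a := #|x :\: y|; set b := #|y :\: x|; set I := #|x :&: y|.
all: set X := #|x|; set Y := #|y|; move=> *; lia.
Qed.
Lemma nbhd_compl n r t : t <= r -> nbhd t (~: Bset n r) \subset ~: Bset n (r - t).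
Proof.
move=> tr; apply/subsetP=> x; rewrite inE => /existsP[y /andP[yB dxy]]; rewrite inE.
apply/negP => xB.
have := subsetP (nbhd_B n (r - t) t) y; rewrite subnK // => h.
by move: yB; rewrite inE h //; apply: (nbhdP xB); rewrite hdistC.
Qed.

Theorem mainTheorem2 (n r : nat) (hn : 2 <= n) (hr : r <= n.-1) :
  #|Bset n r| = gval n r /\ extremal (Bset n r).
Proof.
have n0 : 0 < n by lia.
have cB m : #|Bset n m| = gk n m by rewrite card_Bset // gval_gk.
have cT : #|{set 'I_n}| = 2 ^ n by rewrite -cardsT card_setT.
have cC m : #|~: Bset n m| = 2 ^ n - gk n m.
  by have := cardsC (Bset n m); rewrite cT cB; lia.
split; first exact: card_Bset.
move=> t t0; split.
  move=> B cBB; rewrite cB in cBB.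
  apply: leq_trans (subset_leq_card (nbhd_B n r t)) _; rewrite cB.
  by apply: LBt => //; rewrite cBB.
move=> B cBB.
case: (eqVneq r n.-1) => [rN | rN].
  have -> : ~: Bset n r = set0.
    by apply/eqP; rewrite -cards_eq0 cC gk_big ?rN // subnn.
  by rewrite nbhd0 cards0.
have rlt : r + 2 <= n by lia.
have hC : #|~: Bset n r| = gk n (n - 2 - r).
  by rewrite cC -(@gk_compl n r (n - 2 - r) hn) ?addKn; lia.
have lb : gk n (n - 2 - r + t) <= #|nbhd t B| by apply: LBt => //; rewrite cBB hC.
case: (leqP t r) => tr.
  apply: leq_trans (subset_leq_card (nbhd_compl n tr)) _.
  rewrite cC; apply: leq_trans lb.
  have := @gk_compl n (r - t) (n - 2 - r + t) hn; lia.
apply: leq_trans (max_card _) _; rewrite cT.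
by rewrite -(@gk_big n (n - 2 - r + t)) //; lia.
Qed.
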